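(* Let $f$ be a $C^\infty$ function on $\mathbb R$ with no flat zero, i.e. for every $x$ with $f(x)=0$ there exists $r\in\mathbb N$ with $f^{(r)}(x)\neq0$. Let $F$ be a $C^1$ function on $\mathbb R$ with $\lim_{x\to-\infty}F(x)=-1$ and $\lim_{x\to+\infty}F(x)=1$. Let $a<b$ with $f(a)f(b)\neq0$. Then the number of zeros of $f$ in $[a,b]$ (counted without multiplicity) is finite and $$\mathcal H^0(\{f=0\}\cap[a,b])=\frac12\Big[F\Big(\frac{f'}{f}(b)\Big)-F\Big(\frac{f'}{f}(a)\Big)-\int_a^bF'\Big(\frac{f'(x)}{f(x)}\Big)\Big(\frac{f'(x)}{f(x)}\Big)'dx\Big],$$ where the integrand is defined where $f(x)\neq0$ and the integral is the sum of the (improper) integrals over the open intervals of $[a,b]$ between consecutive zeros of $f$.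
   Context: $\mathcal H^0(\{f=0\}\cap[a,b])$ denotes the number of distinct zeros of $f$ in $[a,b]$. *)

(* Defs.v *)
From Stdlib Require Import Reals List Sorted.
From Coquelicot Require Import Coquelicot.
Open Scope R_scope.

Definition smooth (f : R -> R) : Prop :=
  forall (n : nat) (x : R), ex_derive (Derive_n f n) x.

Definition no_flat_zero (f : R -> R) : Prop :=
  forall x : R, f x = 0 -> exists r : nat, Derive_n f r x <> 0.

Definition is_C1 (F : R -> R) : Prop :=
  (forall x : R, ex_derive F x) /\ (forall x : R, continuous (Derive F) x).

Definition logder (f : R -> R) (x : R) : R := Derive f x / f x.

Fixpoint piecewise_improper_integral (h : R -> R) (p : R) (qs : list R) (I : R)
  : Prop :=
  match qs with
  | nil => I = 0
  | q :: qs' => exists I1 I2 : R,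
      is_RInt_gen h (at_right p) (at_left q) I1 /\
      piecewise_improper_integral h q qs' I2 /\ I = I1 + I2
  end.

(* Main.v *)
Require Import Defs.
From Stdlib Require Import Reals List Sorted.
From Coquelicot Require Import Coquelicot.
From Stdlib Require Import Lra Lia Classical.
Open Scope R_scope.

Lemma ball_R (x e y : R) : @ball R_UniformSpace x e y <-> Rabs (y - x) < e.
Proof. unfold ball; simpl; unfold AbsRing_ball, abs, minus, plus, opp; simpl. tauto. Qed.

Lemma is_derive_eq (f : R -> R) x l l' : is_derive f x l -> l = l' -> is_derive f x l'.
Proof. intros H E; subst; exact H. Qed.

Lemma mvt2 (u u' : R -> R) z x : x <> z -> (forall y, is_derive u y (u' y)) ->
  exists c, 0 < (c - z) * (x - z) /\ Rabs (c - z) < Rabs (x - z) /\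
            u x - u z = u' c * (x - z).
Proof.
  intros Hxz Hd. destruct (Rlt_or_le z x) as [H|H].
  - destruct (MVT_cor2 u u' z x H (fun c _ => proj1 (is_derive_Reals _ _ _) (Hd c)))
      as [c [E Hc]].
    exists c. split; [nra|split; [rewrite !Rabs_pos_eq; lra | lra]].
  - assert (H' : x < z) by (destruct H; [lra| congruence]).
    destruct (MVT_cor2 u u' x z H' (fun c _ => proj1 (is_derive_Reals _ _ _) (Hd c)))
      as [c [E Hc]].
    exists c. split; [nra|split; [rewrite !Rabs_left; lra | lra]].
Qed.

Lemma cmvt (u u' v v' : R -> R) z x : x <> z ->
  (forall y, is_derive u y (u' y)) -> (forall y, is_derive v y (v' y)) ->
  exists c, 0 < (c - z) * (x - z) /\ Rabs (c - z) < Rabs (x - z) /\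
            (u x - u z) * v' c = (v x - v z) * u' c.
Proof.
  intros Hxz Hu Hv.
  set (h := fun t => u t * (v x - v z) - v t * (u x - u z)).
  assert (Hh : forall y, is_derive h y (u' y * (v x - v z) - v' y * (u x - u z))).
  { intro y. unfold h. apply is_derive_Reals.
    apply (derivable_pt_lim_minus (fun t => u t * (v x - v z)) (fun t => v t * (u x - u z))).
    - replace (u' y * (v x - v z)) with (u' y * (v x - v z) + u y * 0) by ring.
      apply (derivable_pt_lim_mult u (fun _ => v x - v z)).
      + apply is_derive_Reals; apply Hu.
      + apply derivable_pt_lim_const.
    - replace (v' y * (u x - u z)) with (v' y * (u x - u z) + v y * 0) by ring.
      apply (derivable_pt_lim_mult v (fun _ => u x - u z)).
      + apply is_derive_Reals; apply Hv.
      + apply derivable_pt_lim_const. }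
  destruct (mvt2 h _ z x Hxz Hh) as [c [H1 [H2 H3]]].
  exists c. split; [exact H1|split; [exact H2|]].
  unfold h in H3.
  assert (E : (u' c * (v x - v z) - v' c * (u x - u z)) * (x - z) = 0) by lra.
  apply Rmult_integral in E. destruct E as [E|E]; [|lra]. lra.
Qed.


Lemma half_lemma c a b : c <> 0 -> Rabs (a - c) < Rabs c / 2 -> Rabs (b - c) < Rabs c / 2 ->
  0 < a / b /\ Rabs (a / b) < 3 /\ b <> 0 /\ a <> 0.
Proof.
  intros Hc Ha Hb.
  destruct (Rlt_or_le 0 c) as [Hp|Hn].
  - rewrite (Rabs_pos_eq c) in Ha, Hb by lra.
    apply Rabs_def2 in Ha. apply Rabs_def2 in Hb.
    assert (0 < a / b) by (apply Rdiv_lt_0_compat; lra).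
    split; [lra|]. split; [|lra].
    rewrite Rabs_pos_eq by lra.
    apply (Rmult_lt_reg_r b); [lra|]. unfold Rdiv. rewrite Rmult_assoc, Rinv_l by lra. lra.
  - assert (c < 0) by (destruct Hn; [lra|congruence]).
    rewrite (Rabs_left c) in Ha, Hb by lra.
    apply Rabs_def2 in Ha. apply Rabs_def2 in Hb.
    assert (E : a / b = (-a) / (-b)) by (field; lra).
    assert (0 < a / b) by (rewrite E; apply Rdiv_lt_0_compat; lra).
    split; [lra|]. split; [|lra].
    rewrite Rabs_pos_eq by lra. rewrite E.
    apply (Rmult_lt_reg_r (-b)); [lra|]. unfold Rdiv. rewrite Rmult_assoc, Rinv_l by lra. lra.
Qed.

Lemma cont_eps (h : R -> R) p : continuous h p ->
  forall eps, 0 < eps -> exists d, 0 < d /\ forall x, Rabs (x - p) < d -> Rabs (h x - h p) < eps.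
Proof.
  intros Hc eps He.
  destruct (proj1 (filterlim_locally h (h p)) Hc (mkposreal eps He)) as [d Hd].
  exists d. split; [apply cond_pos|]. intros x Hx.
  apply ball_R. apply Hd. apply ball_R. exact Hx.
Qed.

Lemma core f z r : smooth f ->
  (forall j, (j < r)%nat -> Derive_n f j z = 0) -> Derive_n f r z <> 0 -> (0 < r)%nat ->
  forall eps, 0 < eps -> exists eta, 0 < eta /\ forall x, 0 < Rabs (x - z) < eta ->
   f x <> 0 /\ Derive f x <> 0 /\ 0 < f x / Derive f x * (x - z) /\ Rabs (f x / Derive f x) < eps.
Proof.
  intros Hs Hz Hr Hr0 eps He.
  destruct r as [|r0]; [lia|].
  set (c := Derive_n f (S r0) z) in *.
  assert (Hd : forall n y, is_derive (Derive_n f n) y (Derive_n f (S n) y)).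
  { intros n y. apply Derive_correct. apply Hs. }
  assert (Hc2 : 0 < Rabs c / 2) by (generalize (Rabs_pos_lt c Hr); lra).
  destruct (cont_eps (Derive_n f (S r0)) z (ex_derive_continuous _ _ (Hs _ _)) _ Hc2)
    as [d [Hd0 Hdd]].
  set (eta := Rmin d (eps / 3)).
  assert (Heta : 0 < eta) by (apply Rmin_pos; lra).
  assert (Hed : eta <= d) by apply Rmin_l.
  assert (Hee : eta <= eps / 3) by apply Rmin_r.
  assert (Claim : forall m j, (j + m = r0)%nat -> forall x, 0 < Rabs (x - z) < eta ->
     Derive_n f j x <> 0 /\ Derive_n f (S j) x <> 0 /\
     0 < Derive_n f j x / Derive_n f (S j) x * (x - z) /\
     Rabs (Derive_n f j x / Derive_n f (S j) x) < eps).
  { induction m as [|m IH]; intros j Hj x Hx.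
    - rewrite Nat.add_0_r in Hj. subst j.
      assert (Hxz : x <> z) by (intro E; subst; rewrite Rminus_diag, Rabs_R0 in Hx; lra).
      destruct (mvt2 _ _ z x Hxz (Hd r0)) as [xi [H1 [H2 H3]]].
      rewrite (Hz r0 (Nat.lt_succ_diag_r _)), Rminus_0_r in H3.
      destruct (half_lemma c (Derive_n f (S r0) xi) (Derive_n f (S r0) x) Hr)
        as [Q1 [Q2 [Q3 Q4]]].
      { apply Hdd. lra. }
      { apply Hdd. lra. }
      assert (E : Derive_n f r0 x / Derive_n f (S r0) x =
                  Derive_n f (S r0) xi / Derive_n f (S r0) x * (x - z)).
      { rewrite H3. field. exact Q3. }
      assert (Hxz' : x - z <> 0) by lra.
      split; [rewrite H3; apply Rmult_integral_contrapositive; tauto|].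
      split; [exact Q3|].
      rewrite E. split.
      + rewrite Rmult_assoc. apply Rmult_lt_0_compat; [exact Q1|].
        apply Rlt_0_sqr in Hxz'. unfold Rsqr in Hxz'. exact Hxz'.
      + rewrite Rabs_mult. apply Rle_lt_trans with (3 * Rabs (x - z)).
        * apply Rmult_le_compat_r; [apply Rabs_pos|lra].
        * lra.
    - assert (HjS : (S j + m = r0)%nat) by lia.
      assert (Hz0 : Derive_n f j z = 0) by (apply Hz; lia).
      assert (Hz1 : Derive_n f (S j) z = 0) by (apply Hz; lia).
      assert (Hxz : x <> z) by (intro E; subst; rewrite Rminus_diag, Rabs_R0 in Hx; lra).
      destruct (mvt2 _ _ z x Hxz (Hd j)) as [xi [H1 [H2 H3]]].
      rewrite Hz0, Rminus_0_r in H3.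
      destruct (IH (S j) HjS xi) as [A1 _].
      { split; [|lra]. apply Rabs_pos_lt. intro E. rewrite E in H1. lra. }
      destruct (IH (S j) HjS x Hx) as [B1 _].
      destruct (cmvt _ _ _ _ z x Hxz (Hd j) (Hd (S j))) as [xi' [C1 [C2 C3]]].
      rewrite Hz0, Hz1, !Rminus_0_r in C3.
      destruct (IH (S j) HjS xi') as [D1 [D2 [D3 D4]]].
      { split; [|lra]. apply Rabs_pos_lt. intro E. rewrite E in C1. lra. }
      assert (E : Derive_n f j x / Derive_n f (S j) x =
                  Derive_n f (S j) xi' / Derive_n f (S (S j)) xi').
      { field_simplify_eq; [|tauto]. lra. }
      split; [rewrite H3; apply Rmult_integral_contrapositive; split; [exact A1|lra]|].
      split; [exact B1|].
      rewrite E. split; [|exact D4].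
      set (rho := Derive_n f (S j) xi' / Derive_n f (S (S j)) xi') in *.
      destruct (Rlt_or_le 0 (rho * (x - z))) as [P|P]; [exact P|].
      exfalso.
      assert (0 < (rho * (xi' - z)) * ((xi' - z) * (x - z))) by (apply Rmult_lt_0_compat; lra).
      assert (0 < (xi' - z) * (xi' - z)) by nra.
      nra. }
  exists eta. split; [exact Heta|]. intros x Hx.
  exact (Claim r0 0%nat eq_refl x Hx).
Qed.

Lemma min_nat (P : nat -> Prop) n : P n -> exists m, P m /\ forall k, (k < m)%nat -> ~ P k.
Proof.
  revert P. induction n as [n IH] using (well_founded_induction Wf_nat.lt_wf). intros P Hn.
  destruct (classic (exists k, (k < n)%nat /\ P k)) as [[k [Hk Pk]]|N].
  - exact (IH k Hk P Pk).
  - exists n. split; [exact Hn|]. intros k Hk Pk. apply N. exists k. tauto.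
Qed.

Lemma zero_core f z : smooth f -> no_flat_zero f -> f z = 0 ->
  forall eps, 0 < eps -> exists eta, 0 < eta /\ forall x, 0 < Rabs (x - z) < eta ->
   f x <> 0 /\ Derive f x <> 0 /\ 0 < f x / Derive f x * (x - z) /\ Rabs (f x / Derive f x) < eps.
Proof.
  intros Hs Hn Hz.
  destruct (Hn z Hz) as [r0 Hr0].
  destruct (min_nat (fun r => Derive_n f r z <> 0) r0 Hr0) as [r [Hr Hmin]].
  apply (core f z r Hs).
  - intros j Hj. apply NNPP. apply Hmin. exact Hj.
  - exact Hr.
  - destruct r; [simpl in Hr; contradiction|lia].
Qed.

Definition RL (k : R -> R) p L := forall eps, 0 < eps ->
  exists d, 0 < d /\ forall u, p < u < p + d -> Rabs (k u - L) < eps.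
Definition LL (k : R -> R) q L := forall eps, 0 < eps ->
  exists d, 0 < d /\ forall u, q - d < u < q -> Rabs (k u - L) < eps.

Lemma zero_RL f F z : smooth f -> no_flat_zero f -> is_lim F p_infty 1 -> f z = 0 ->
  RL (fun x => F (logder f x)) z 1.
Proof.
  intros Hs Hn Hl Hz eps He.
  apply is_lim_spec in Hl. destruct (Hl (mkposreal eps He)) as [M HM]. simpl in HM.
  assert (Hp : 0 < / (Rabs M + 1)) by (apply Rinv_0_lt_compat; generalize (Rabs_pos M); lra).
  destruct (zero_core f z Hs Hn Hz _ Hp) as [eta [Heta H]].
  exists eta. split; [exact Heta|]. intros u Hu.
  destruct (H u) as [A1 [A2 [A3 A4]]].
  { rewrite Rabs_pos_eq by lra. lra. }
  apply HM.
  set (rho := f u / Derive f u) in *.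
  assert (Hr : 0 < rho).
  { destruct (Rlt_or_le 0 rho) as [P|P]; [exact P|]. nra. }
  assert (E : logder f u = / rho) by (unfold logder, rho; field; tauto).
  rewrite E.
  apply Rle_lt_trans with (Rabs M); [apply RRle_abs|].
  apply Rlt_le_trans with (Rabs M + 1); [lra|].
  rewrite <- (Rinv_inv (Rabs M + 1)).
  apply Rlt_le. apply Rinv_lt_contravar.
  - apply Rmult_lt_0_compat; lra.
  - rewrite Rabs_pos_eq in A4 by lra. exact A4.
Qed.

Lemma zero_LL f F z : smooth f -> no_flat_zero f -> is_lim F m_infty (-1) -> f z = 0 ->
  LL (fun x => F (logder f x)) z (-1).
Proof.
  intros Hs Hn Hl Hz eps He.
  apply is_lim_spec in Hl. destruct (Hl (mkposreal eps He)) as [M HM]. simpl in HM.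
  assert (Hp : 0 < / (Rabs M + 1)) by (apply Rinv_0_lt_compat; generalize (Rabs_pos M); lra).
  destruct (zero_core f z Hs Hn Hz _ Hp) as [eta [Heta H]].
  exists eta. split; [exact Heta|]. intros u Hu.
  destruct (H u) as [A1 [A2 [A3 A4]]].
  { rewrite Rabs_left by lra. lra. }
  apply HM.
  set (rho := f u / Derive f u) in *.
  assert (Hr : rho < 0).
  { destruct (Rlt_or_le rho 0) as [P|P]; [exact P|]. nra. }
  assert (E : logder f u = - / (- rho)) by (unfold logder, rho; field; tauto).
  rewrite E.
  apply Rlt_le_trans with (- Rabs M); [|generalize (Rabs_maj2 M); lra].
  apply Ropp_lt_contravar.
  apply Rle_lt_trans with (Rabs M + 1); [lra|].
  rewrite <- (Rinv_inv (Rabs M + 1)).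
  apply Rinv_lt_contravar.
  - apply Rmult_lt_0_compat; lra.
  - rewrite Rabs_left in A4 by lra. exact A4.
Qed.

Lemma logder_cont f p : smooth f -> f p <> 0 -> continuous (logder f) p.
Proof.
  intros Hs Hp. apply (@ex_derive_continuous R_AbsRing R_NormedModule). unfold logder.
  apply (ex_derive_div (Derive f) f p (Hs 1%nat p) (Hs 0%nat p) Hp).
Qed.

Lemma nz_lim f F p : smooth f -> is_C1 F -> f p <> 0 ->
  RL (fun x => F (logder f x)) p (F (logder f p)) /\ LL (fun x => F (logder f x)) p (F (logder f p)).
Proof.
  intros Hs [HF1 HF2] Hp.
  assert (Hc : continuous (fun x => F (logder f x)) p).
  { apply (continuous_comp (logder f) F). apply logder_cont; assumption.
    apply (@ex_derive_continuous R_AbsRing R_NormedModule). apply HF1. }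
  split; intros eps He; destruct (cont_eps _ p Hc eps He) as [d [Hd H]];
    exists d; split; try exact Hd; intros u Hu; apply H;
    [rewrite Rabs_pos_eq by lra | rewrite Rabs_left by lra]; lra.
Qed.

Lemma isolated f c : smooth f -> no_flat_zero f ->
  exists d, 0 < d /\ forall x, 0 < Rabs (x - c) < d -> f x <> 0.
Proof.
  intros Hs Hn. destruct (Req_dec (f c) 0) as [Hz|Hz].
  - destruct (zero_core f c Hs Hn Hz 1 Rlt_0_1) as [eta [He H]].
    exists eta. split; [exact He|]. intros x Hx. apply (H x Hx).
  - assert (Hc : continuous f c) by (apply (@ex_derive_continuous R_AbsRing R_NormedModule); apply (Hs 0%nat c)).
    assert (Hpos : 0 < Rabs (f c)) by (apply Rabs_pos_lt; exact Hz).
    destruct (cont_eps f c Hc _ Hpos) as [d [Hd H]].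
    exists d. split; [exact Hd|]. intros x Hx E.
    specialize (H x (proj2 Hx)). rewrite E, Rminus_0_l, Rabs_Ropp in H. lra.
Qed.

Lemma ftc f F u v : smooth f -> is_C1 F -> u < v -> (forall x, u <= x <= v -> f x <> 0) ->
  is_RInt (fun x => Derive F (logder f x) * Derive (logder f) x) u v
          (F (logder f v) - F (logder f u)).
Proof.
  intros Hs [HF1 HF2] Huv Hnz.
  set (e := fun y => Derive (Derive f) y / f y - logder f y * logder f y).
  assert (Hg : forall x, f x <> 0 -> is_derive (logder f) x (e x)).
  { intros x Hx. unfold e.
    eapply is_derive_eq.
    - unfold logder. apply (is_derive_div (Derive f) f x).
      + apply (Derive_correct (Derive f)). apply (Hs 1%nat).
      + apply (Derive_correct f). apply (Hs 0%nat).
      + exact Hx.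
    - unfold logder. simpl. field. exact Hx. }
  set (h2 := fun x => Derive F (logder f x) * e x).
  apply (is_RInt_ext h2).
  { intros x Hx. unfold h2. f_equal. symmetry. apply is_derive_unique. apply Hg.
    apply Hnz. rewrite Rmin_left, Rmax_right in Hx by lra. lra. }
  assert (Hm : forall x, Rmin u v <= x <= Rmax u v -> f x <> 0).
  { intros x Hx. apply Hnz. rewrite Rmin_left, Rmax_right in Hx by lra. exact Hx. }
  apply (is_RInt_derive (fun x => F (logder f x)) h2 u v).
  - intros x Hx. unfold h2.
    eapply is_derive_eq.
    + apply (is_derive_comp F (logder f) x).
      * apply Derive_correct. apply HF1.
      * apply Hg. apply Hm; exact Hx.
    + simpl. unfold scal; simpl. unfold mult; simpl. ring.
  - intros x Hx. unfold h2.
    apply (continuous_mult (fun x => Derive F (logder f x)) e).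
    + apply (continuous_comp (logder f) (Derive F)).
      * apply logder_cont; [exact Hs| apply Hm; exact Hx].
      * apply HF2.
    + apply (@ex_derive_continuous R_AbsRing R_NormedModule). unfold e.
      apply (ex_derive_minus (fun y => Derive (Derive f) y / f y) (fun y => logder f y * logder f y)).
      * apply (ex_derive_div (Derive (Derive f)) f x (Hs 2%nat x) (Hs 0%nat x)). apply Hm; exact Hx.
      * apply (ex_derive_mult (logder f) (logder f));
          exists (e x); apply Hg; apply Hm; exact Hx.
Qed.

Lemma segment f F p q Lp Lq : smooth f -> is_C1 F -> p < q ->
  (forall x, p < x < q -> f x <> 0) ->
  RL (fun x => F (logder f x)) p Lp -> LL (fun x => F (logder f x)) q Lq ->
  is_RInt_gen (fun x => Derive F (logder f x) * Derive (logder f) x)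
    (at_right p) (at_left q) (Lq - Lp).
Proof.
  intros Hs HF Hpq Hnz HR HL P [eps HP].
  assert (He2 : 0 < eps / 2) by (generalize (cond_pos eps); lra).
  destruct (HR _ He2) as [d1 [Hd1 H1]].
  destruct (HL _ He2) as [d2 [Hd2 H2]].
  set (e1 := Rmin d1 ((q - p) / 2)).
  set (e2 := Rmin d2 ((q - p) / 2)).
  assert (He1 : 0 < e1) by (apply Rmin_pos; lra).
  assert (He2' : 0 < e2) by (apply Rmin_pos; lra).
  assert (E1 : e1 <= d1) by apply Rmin_l. assert (E1' : e1 <= (q - p) / 2) by apply Rmin_r.
  assert (E2 : e2 <= d2) by apply Rmin_l. assert (E2' : e2 <= (q - p) / 2) by apply Rmin_r.
  unfold filtermapi.
  apply (Filter_prod _ _ _ (fun u => p < u < p + e1) (fun v => q - e2 < v < q)).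
  - exists (mkposreal e1 He1). intros y Hy Hpy. apply ball_R in Hy. change (Rabs (y - p) < e1) in Hy.
    apply Rabs_def2 in Hy. split; lra.
  - exists (mkposreal e2 He2'). intros y Hy Hpy. apply ball_R in Hy. change (Rabs (y - q) < e2) in Hy.
    apply Rabs_def2 in Hy. split; lra.
  - intros u v Hu Hv. simpl.
    exists (F (logder f v) - F (logder f u)). split.
    + apply ftc; [exact Hs|exact HF|lra|]. intros x Hx. apply Hnz. lra.
    + apply HP. apply ball_R.
      assert (A := H1 u ltac:(lra)). assert (B := H2 v ltac:(lra)).
      apply Rabs_def2 in A. apply Rabs_def2 in B.
      apply Rabs_def1; lra.
Qed.

Lemma pw f F b : smooth f -> is_C1 F -> f b <> 0 ->
  LL (fun x => F (logder f x)) b (F (logder f b)) ->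
  (forall z, f z = 0 -> RL (fun x => F (logder f x)) z 1 /\ LL (fun x => F (logder f x)) z (-1)) ->
  forall zs p Lp, RL (fun x => F (logder f x)) p Lp -> p < b -> StronglySorted Rlt zs ->
  (forall x, In x zs -> p < x < b /\ f x = 0) ->
  (forall x, p < x < b -> f x = 0 -> In x zs) ->
  piecewise_improper_integral (fun x => Derive F (logder f x) * Derive (logder f) x)
     p (zs ++ b :: nil) (F (logder f b) - Lp - 2 * INR (length zs)).
Proof.
  intros Hs HF Hb HLb Hz zs. induction zs as [|z zs IH]; intros p Lp HRp Hpb Hso Hin Hall.
  - simpl. exists (F (logder f b) - Lp), 0. split; [|split; [reflexivity|ring]].
    apply segment; try assumption.
  - simpl app. simpl length.
    inversion Hso as [|? ? Hso' Hfa]; subst.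
    assert (Hzi := Hin z (or_introl eq_refl)).
    assert (Hfz : forall x, In x zs -> z < x) by (intros x Hx; exact (proj1 (Forall_forall _ _) Hfa x Hx)).
    exists (-1 - Lp), (F (logder f b) - 1 - 2 * INR (length zs)).
    split; [|split].
    + apply segment; try assumption; [lra| |apply (Hz z (proj2 Hzi))].
      intros x Hx E. destruct (Hall x ltac:(lra) E) as [E'|E'].
      * subst; lra.
      * specialize (Hfz x E'). lra.
    + apply IH; try assumption.
      * apply (Hz z (proj2 Hzi)).
      * lra.
      * intros x Hx. split; [split|].
        -- apply Hfz; exact Hx.
        -- apply (Hin x (or_intror Hx)).
        -- apply (Hin x (or_intror Hx)).
      * intros x Hx E. destruct (Hall x ltac:(lra) E) as [E'|E']; [subst; lra|exact E'].
    + rewrite S_INR. ring.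
Qed.

Lemma SS_snoc (l : list R) c : StronglySorted Rlt l -> (forall x, In x l -> x < c) ->
  StronglySorted Rlt (l ++ c :: nil).
Proof.
  induction l as [|y l IH]; intros H Hl; simpl.
  - constructor; constructor.
  - inversion H as [|? ? H1 H2]; subst. constructor.
    + apply IH; [exact H1|]. intros x Hx. apply Hl. right; exact Hx.
    + apply Forall_app. split; [exact H2|]. constructor; [|constructor].
      apply Hl. left; reflexivity.
Qed.

Definition Qz (f : R -> R) a t := exists zs, StronglySorted Rlt zs /\
  (forall x, In x zs <-> a <= x <= t /\ f x = 0).

Lemma finite_zeros f a b :
  (forall c, exists d, 0 < d /\ forall x, 0 < Rabs (x - c) < d -> f x <> 0) ->
  a <= b -> f a <> 0 -> Qz f a b.
Proof.
  intros Hiso Hab Ha.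
  set (E := fun t => a <= t <= b /\ Qz f a t).
  assert (Eb : bound E) by (exists b; intros t [Ht _]; lra).
  assert (Ea : E a).
  { split; [lra|]. exists nil. split; [constructor|]. intros x; split.
    - intros [].
    - intros [Hx Hf]. assert (x = a) by lra. subst. contradiction. }
  destruct (completeness E Eb (ex_intro _ a Ea)) as [c [Hub Hlub]].
  assert (Hac : a <= c) by (apply Hub; exact Ea).
  assert (Hcb : c <= b) by (apply Hlub; intros t [Ht _]; lra).
  destruct (Hiso c) as [d [Hd Hdd]].
  assert (Ht : exists t, E t /\ c - d < t).
  { apply NNPP. intro N.
    assert (c <= c - d); [|lra].
    apply Hlub. intros t Et. apply Rnot_lt_le. intro L. apply N. exists t. tauto. }
  destruct Ht as [t [[Ht [zs [Hso Hzs]]] Htc]].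
  assert (Htc' : t <= c) by (apply Hub; split; [exact Ht| exists zs; tauto]).
  assert (Hs : forall s, c <= s < c + d -> Qz f a s).
  { intros s Hs.
    destruct (Req_dec (f c) 0) as [Hfc|Hfc]; [destruct (Rlt_le_dec t c) as [Ltc|Ltc]|].
    - exists (zs ++ c :: nil). split.
      + apply SS_snoc; [exact Hso|]. intros x Hx. apply Hzs in Hx. lra.
      + intros x. rewrite in_app_iff. simpl. split.
        * intros [Hx|[Hx|[]]].
          -- apply Hzs in Hx. split; [lra|tauto].
          -- subst. split; [lra|exact Hfc].
        * intros [Hx Hf]. destruct (Rle_lt_dec x t) as [L|L].
          -- left. apply Hzs. split; [lra|exact Hf].
          -- right. left. apply NNPP. intro N.
             apply (Hdd x); [|exact Hf]. split.
             ++ apply Rabs_pos_lt. intro. apply N. lra.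
             ++ apply Rabs_def1; lra.
    - exists zs. split; [exact Hso|]. intros x. rewrite Hzs. split.
      + intros [Hx Hf]. split; [lra|exact Hf].
      + intros [Hx Hf]. split; [|exact Hf]. split; [lra|].
        destruct (Rle_lt_dec x t) as [L|L]; [exact L|].
        exfalso. destruct (Req_dec x c) as [Ex|Ex]; [lra|].
        apply (Hdd x); [|exact Hf]. split.
        ++ apply Rabs_pos_lt. lra.
        ++ apply Rabs_def1; lra.
    - exists zs. split; [exact Hso|]. intros x. rewrite Hzs. split.
      + intros [Hx Hf]. split; [lra|exact Hf].
      + intros [Hx Hf]. split; [|exact Hf]. split; [lra|].
        destruct (Rle_lt_dec x t) as [L|L]; [exact L|].
        exfalso. destruct (Req_dec x c) as [Ex|Ex]; [subst; contradiction|].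
        apply (Hdd x); [|exact Hf]. split.
        ++ apply Rabs_pos_lt. lra.
        ++ apply Rabs_def1; lra. }
  destruct (Rle_dec b (c + d / 2)) as [Hb|Hb].
  - destruct (Req_dec b c) as [Ebc|Ebc].
    + apply Hs. lra.
    + apply Hs. lra.
  - exfalso. assert (c + d / 2 <= c); [|lra].
    apply Hub. split; [lra|]. apply Hs. lra.
Qed.

Theorem proposition4 (f F : R -> R) (a b : R) :
  smooth f -> no_flat_zero f ->
  is_C1 F ->
  is_lim F m_infty (-1) -> is_lim F p_infty 1 ->
  a < b -> f a * f b <> 0 ->
  exists zs : list R,
    Sorted Rlt zs /\
    (forall x : R, In x zs <-> (a <= x <= b /\ f x = 0)) /\
    exists I : R,
      piecewise_improper_integral
        (fun x => Derive F (logder f x) * Derive (logder f) x) a (zs ++ b :: nil) I /\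
      INR (length zs) = / 2 * (F (logder f b) - F (logder f a) - I).
Proof.
  intros Hs Hn HF Hm Hp Hab Hfab.
  assert (Ha : f a <> 0) by (intro E; apply Hfab; rewrite E; ring).
  assert (Hb : f b <> 0) by (intro E; apply Hfab; rewrite E; ring).
  destruct (finite_zeros f a b (fun c => isolated f c Hs Hn) ltac:(lra) Ha) as [zs [Hso Hzs]].
  exists zs. split; [apply StronglySorted_Sorted; exact Hso|]. split; [exact Hzs|].
  exists (F (logder f b) - F (logder f a) - 2 * INR (length zs)). split.
  - apply pw; try assumption.
    + apply (nz_lim f F b Hs HF Hb).
    + intros z Hz. split; [apply zero_RL|apply zero_LL]; assumption.
    + apply (nz_lim f F a Hs HF Ha).
    + intros x Hx. apply Hzs in Hx. destruct Hx as [Hx Hf].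
      split; [|exact Hf]. split.
      * destruct Hx as [[L|L] _]; [exact L|subst; contradiction].
      * destruct Hx as [_ [L|L]]; [exact L|subst; contradiction].
    + intros x Hx Hf. apply Hzs. split; [lra|exact Hf].
  - field.
Qed.
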